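(* Let $i=\lambda x.x$ and $\Omega=(\lambda x.x\,x)(\lambda x.x\,x)$. Then $\mathcal{S}k.i \simeq_{\mathrm{ctx}} (\mathcal{S}k.i)\,\Omega$, but $\mathcal{S}k.i \not\sim (\mathcal{S}k.i)\,\Omega$.
   Context: The calculus $\lambda_{\mathcal S}$. Terms: $t ::= x \mid \lambda x.t \mid t\,t \mid \mathcal{S}k.t \mid \langle t\rangle$ (shift and reset); values: $v ::= \lambda x.t \mid x$. $\lambda x.t$ binds $x$, $\mathcal{S}k.t$ binds $k$; terms up to $\alpha$-conversion; capture-avoiding substitution $t\{v/x\}$. Pure contexts $F ::= [\,] \mid v\,F \mid F\,t$; evaluation contexts $E ::= [\,] \mid v\,E \mid E\,t \mid \langle E\rangle$; general contexts $C ::= [\,] \mid \lambda x.C \mid t\,C \mid C\,t \mid \mathcal{S}k.C \mid \langle C\rangle$. Reduction: $E[(\lambda x.t)\,v] \to E[t\{v/x\}]$; $E[\langle F[\mathcal{S}k.t]\rangle] \to E[\langle t\{\lambda x.\langle F[x]\rangle/k\}\rangle]$ ($x\notin\mathrm{fv}(F)$); $E[\langle v\rangle]\to E[v]$. $t\Downarrow t'$ iff $t\to^*t'$ and $t'$ irreducible. Stuck: not a value and irreducible; normal form: value or stuck; control stuck: $F[\mathcal{S}k.t]$; open stuck: $E[x\,v]$. Fresh: not free in the terms/contexts considered. $t_0\simeq_{\mathrm{ctx}}t_1$ iff for every context $C$ with $C[t_0],C[t_1]$ closed: $C[t_0]\Downarrow$ a value implies $C[t_1]\Downarrow$ a value;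 $C[t_0]\Downarrow$ a control stuck term implies $C[t_1]\Downarrow$ a control stuck term; and conversely. Normal form bisimilarity $\sim$: for a relation $\mathcal R$ on terms, extend to evaluation contexts by $E_0\mathrel{\mathcal R}E_1$ iff either $E_0=E_0'[\langle F_0\rangle]$, $E_1=E_1'[\langle F_1\rangle]$ ($F_i$ pure) with $E_0'[x]\mathrel{\mathcal R}E_1'[x]$ and $\langle F_0[x]\rangle\mathrel{\mathcal R}\langle F_1[x]\rangle$ ($x$ fresh), or $E_0=F_0$, $E_1=F_1$ pure with $F_0[x]\mathrel{\mathcal R}F_1[x]$ ($x$ fresh). $v\mathbin{@}y$ is $x\,y$ if $v=x$, $t\{y/x\}$ if $v=\lambda x.t$. $\mathcal R^{\mathrm{nf}}$: $v_0\mathrel{\mathcal R^{\mathrm{nf}}}v_1$ if $v_0\mathbin{@}x\mathrel{\mathcal R}v_1\mathbin{@}x$ ($x$ fresh); $F_0[\mathcal{S}k.t_0]\mathrel{\mathcal R^{\mathrm{nf}}}F_1[\mathcal{S}k.t_1]$ if $F_0\mathrel{\mathcal R}F_1$ and $\langle t_0\rangle\mathrel{\mathcal R}\langle t_1\rangle$; $E_0[x\,v_0]\mathrel{\mathcal R^{\mathrm{nf}}}E_1[x\,v_1]$ if $E_0\mathrel{\mathcal R}E_1$ and $v_0\mathrel{\mathcal R^{\mathrm{nf}}}v_1$. $\mathcal R$ is a normal form simulation if $t_0\mathrel{\mathcal R}t_1$, $t_0\Downarrow t_0'$ imply $t_1\Downarrow t_1'$ with $t_0'\mathrel{\mathcal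 R^{\mathrm{nf}}}t_1'$; a bisimulation if $\mathcal R$ and $\mathcal R^{-1}$ are simulations; $\sim$ is the largest one. *)

(* Defs.v *)
(* The calculus lambda_S (shift/reset) in locally nameless
   representation: bound variables are de Bruijn indices (so terms are
   identified up to alpha-conversion), free variables are names (nat). *)
From Stdlib Require Import List Arith.
Import ListNotations.

Inductive term : Type :=
| BVar  (n : nat)
| FVar  (x : nat)
| Lam   (t : term)
| App   (t u : term)
| Shift (t : term)         (* S k. t  binds index 0 (= k) in t *)
| Reset (t : term).

Fixpoint open_rec (k : nat) (u : term) (t : term) : term :=
  match t with
  | BVar n => if Nat.eqb n k then u else BVar n
  | FVar x => FVar x
  | Lam t1 => Lam (open_rec (S k) u t1)
  | App t1 t2 => App (open_rec k u t1) (open_rec k u t2)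
  | Shift t1 => Shift (open_rec (S k) u t1)
  | Reset t1 => Reset (open_rec k u t1)
  end.
Definition open (t u : term) : term := open_rec 0 u t.

Fixpoint close_rec (k : nat) (x : nat) (t : term) : term :=
  match t with
  | BVar n => BVar n
  | FVar y => if Nat.eqb y x then BVar k else FVar y
  | Lam t1 => Lam (close_rec (S k) x t1)
  | App t1 t2 => App (close_rec k x t1) (close_rec k x t2)
  | Shift t1 => Shift (close_rec (S k) x t1)
  | Reset t1 => Reset (close_rec k x t1)
  end.
Definition close (x : nat) (t : term) : term := close_rec 0 x t.

Fixpoint fv (t : term) : list nat :=
  match t with
  | BVar _ => []
  | FVar x => [x]
  | Lam t1 => fv t1
  | App t1 t2 => fv t1 ++ fv t2
  | Shift t1 => fv t1
  | Reset t1 => fv t1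
  end.

Fixpoint lc_at (k : nat) (t : term) : Prop :=
  match t with
  | BVar n => n < k
  | FVar _ => True
  | Lam t1 => lc_at (S k) t1
  | App t1 t2 => lc_at k t1 /\ lc_at k t2
  | Shift t1 => lc_at (S k) t1
  | Reset t1 => lc_at k t1
  end.
Definition lc (t : term) : Prop := lc_at 0 t.
Definition closed (t : term) : Prop := lc t /\ fv t = [].

Definition is_value (t : term) : Prop :=
  match t with
  | Lam _ => True
  | FVar _ => True
  | _ => False
  end.

(* Pure contexts F ::= [] | v F | F t *)
Inductive pctx : Type :=
| PHole
| PAppR (v : term) (F : pctx)
| PAppL (F : pctx) (t : term).

Fixpoint plugP (F : pctx) (t : term) : term :=
  match F with
  | PHole => t
  | PAppR v F1 => App v (plugP F1 t)
  | PAppL F1 u => App (plugP F1 t) u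
  end.

Fixpoint pctx_ok (F : pctx) : Prop :=
  match F with
  | PHole => True
  | PAppR v F1 => is_value v /\ pctx_ok F1
  | PAppL F1 _ => pctx_ok F1
  end.

Fixpoint fvP (F : pctx) : list nat :=
  match F with
  | PHole => []
  | PAppR v F1 => fv v ++ fvP F1
  | PAppL F1 u => fvP F1 ++ fv u
  end.

(* Evaluation contexts E ::= [] | v E | E t | <E> *)
Inductive ectx : Type :=
| EHole
| EAppR (v : term) (E : ectx)
| EAppL (E : ectx) (t : term)
| EReset (E : ectx).

Fixpoint plugE (E : ectx) (t : term) : term :=
  match E with
  | EHole => t
  | EAppR v E1 => App v (plugE E1 t)
  | EAppL E1 u => App (plugE E1 t) u
  | EReset E1 => Reset (plugE E1 t)
  end.

Fixpoint ectx_ok (E : ectx) : Prop :=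
  match E with
  | EHole => True
  | EAppR v E1 => is_value v /\ ectx_ok E1
  | EAppL E1 _ => ectx_ok E1
  | EReset E1 => ectx_ok E1
  end.

Fixpoint fvE (E : ectx) : list nat :=
  match E with
  | EHole => []
  | EAppR v E1 => fv v ++ fvE E1
  | EAppL E1 u => fvE E1 ++ fv u
  | EReset E1 => fvE E1
  end.

Fixpoint ecomp (E E' : ectx) : ectx :=
  match E with
  | EHole => E'
  | EAppR v E1 => EAppR v (ecomp E1 E')
  | EAppL E1 u => EAppL (ecomp E1 E') u
  | EReset E1 => EReset (ecomp E1 E')
  end.

Fixpoint ectx_of_pctx (F : pctx) : ectx :=
  match F with
  | PHole => EHole
  | PAppR v F1 => EAppR v (ectx_of_pctx F1)
  | PAppL F1 u => EAppL (ectx_of_pctx F1) u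
  end.

(* General contexts C ::= [] | \x.C | t C | C t | S k.C | <C>, with named
   binders that may capture free variables of the plugged term. *)
Inductive gctx : Type :=
| GHole
| GLam (x : nat) (C : gctx)
| GAppR (t : term) (C : gctx)
| GAppL (C : gctx) (t : term)
| GShift (k : nat) (C : gctx)
| GReset (C : gctx).

Fixpoint plugG (C : gctx) (t : term) : term :=
  match C with
  | GHole => t
  | GLam x C1 => Lam (close x (plugG C1 t))
  | GAppR u C1 => App u (plugG C1 t)
  | GAppL C1 u => App (plugG C1 t) u
  | GShift k C1 => Shift (close k (plugG C1 t))
  | GReset C1 => Reset (plugG C1 t)
  end.

Fixpoint gctx_ok (C : gctx) : Prop :=
  match C with
  | GHole => True
  | GLam _ C1 => gctx_ok C1
  | GAppR u C1 => lc u /\ gctx_ok C1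
  | GAppL C1 u => gctx_ok C1 /\ lc u
  | GShift _ C1 => gctx_ok C1
  | GReset C1 => gctx_ok C1
  end.

Inductive step : term -> term -> Prop :=
| step_beta : forall E t v, ectx_ok E -> is_value v ->
    step (plugE E (App (Lam t) v)) (plugE E (open t v))
| step_shift : forall E F t, ectx_ok E -> pctx_ok F ->
    (* E[<F[S k.t]>] -> E[< t{\x.<F[x]>/k} >]; the index 0 below is bound by
       the new lambda, so x is automatically not free in F *)
    step (plugE E (Reset (plugP F (Shift t))))
         (plugE E (Reset (open t (Lam (Reset (plugP F (BVar 0)))))))
| step_reset : forall E v, ectx_ok E -> is_value v ->
    step (plugE E (Reset v)) (plugE E v).

Inductive steps : term -> term -> Prop :=
| steps_refl : forall t, steps t t
| steps_step : forall t t' t'', step t t' -> steps t' t'' -> steps t t''.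

Definition irreducible (t : term) : Prop := ~ exists t', step t t'.

Definition eval (t t' : term) : Prop := steps t t' /\ irreducible t'.

Definition control_stuck (t : term) : Prop :=
  exists F s, pctx_ok F /\ t = plugP F (Shift s).

Definition ctx_equiv (t0 t1 : term) : Prop :=
  forall C : gctx, gctx_ok C ->
    closed (plugG C t0) -> closed (plugG C t1) ->
    ((exists v, eval (plugG C t0) v /\ is_value v) <->
     (exists v, eval (plugG C t1) v /\ is_value v)) /\
    ((exists u, eval (plugG C t0) u /\ control_stuck u) <->
     (exists u, eval (plugG C t1) u /\ control_stuck u)).

Definition rel := term -> term -> Prop.

Definition ectx_rel (R : rel) (E0 E1 : ectx) : Prop :=
  (exists E0' F0 E1' F1,
      pctx_ok F0 /\ pctx_ok F1 /\
      E0 = ecomp E0' (EReset (ectx_of_pctx F0)) /\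
      E1 = ecomp E1' (EReset (ectx_of_pctx F1)) /\
      exists x, ~ In x (fvE E0) /\ ~ In x (fvE E1) /\
        R (plugE E0' (FVar x)) (plugE E1' (FVar x)) /\
        R (Reset (plugP F0 (FVar x))) (Reset (plugP F1 (FVar x))))
  \/
  (exists F0 F1,
      pctx_ok F0 /\ pctx_ok F1 /\
      E0 = ectx_of_pctx F0 /\ E1 = ectx_of_pctx F1 /\
      exists x, ~ In x (fvE E0) /\ ~ In x (fvE E1) /\
        R (plugP F0 (FVar x)) (plugP F1 (FVar x))).

Definition app_at (v : term) (y : nat) : term :=
  match v with
  | FVar x => App (FVar x) (FVar y)
  | Lam t => open t (FVar y)
  | _ => App v (FVar y)   (* not used: v is always a value *)
  end.

Definition nf_val (R : rel) (v0 v1 : term) : Prop :=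
  is_value v0 /\ is_value v1 /\
  exists x, ~ In x (fv v0) /\ ~ In x (fv v1) /\ R (app_at v0 x) (app_at v1 x).

Definition nf_rel (R : rel) (t0 t1 : term) : Prop :=
  nf_val R t0 t1
  \/
  (exists F0 s0 F1 s1,
      pctx_ok F0 /\ pctx_ok F1 /\
      t0 = plugP F0 (Shift s0) /\ t1 = plugP F1 (Shift s1) /\
      ectx_rel R (ectx_of_pctx F0) (ectx_of_pctx F1) /\
      exists k, ~ In k (fv s0) /\ ~ In k (fv s1) /\
        R (Reset (open s0 (FVar k))) (Reset (open s1 (FVar k))))
  \/
  (exists E0 E1 x v0 v1,
      ectx_ok E0 /\ ectx_ok E1 /\
      t0 = plugE E0 (App (FVar x) v0) /\ t1 = plugE E1 (App (FVar x) v1) /\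
      ectx_rel R E0 E1 /\ nf_val R v0 v1).

Definition nf_simulation (R : rel) : Prop :=
  forall t0 t1, R t0 t1 -> forall t0', eval t0 t0' ->
    exists t1', eval t1 t1' /\ nf_rel R t0' t1'.

Definition nf_bisimulation (R : rel) : Prop :=
  nf_simulation R /\ nf_simulation (fun a b => R b a).

Definition nf_bisimilar (t0 t1 : term) : Prop :=
  exists R, nf_bisimulation R /\ R t0 t1.

Definition tI : term := Lam (BVar 0).
Definition tOmega : term :=
  App (Lam (App (BVar 0) (BVar 0))) (Lam (App (BVar 0) (BVar 0))).

(* Main.v *)
Require Import Defs.
From Stdlib Require Import List Arith.
Import ListNotations.

Inductive sim : term -> term -> Prop :=
| s_base : sim (Shift tI) (App (Shift tI) tOmega)
| s_bvar : forall n, sim (BVar n) (BVar n)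
| s_fvar : forall x, sim (FVar x) (FVar x)
| s_lam : forall a b, sim a b -> sim (Lam a) (Lam b)
| s_app : forall a b c d, sim a c -> sim b d -> sim (App a b) (App c d)
| s_shift : forall a b, sim a b -> sim (Shift a) (Shift b)
| s_reset : forall a b, sim a b -> sim (Reset a) (Reset b).

Lemma sim_refl : forall t, sim t t.
Proof. induction t; constructor; auto. Qed.

Lemma sim_app_l : forall a b t, sim (App a b) t ->
  exists c d, t = App c d /\ sim a c /\ sim b d.
Proof. intros a b t H; inversion H; subst; first [right; repeat split; reflexivity | left; eauto | eauto]. Qed.

Lemma sim_app_r : forall a b t, sim t (App a b) ->
  (exists c d, t = App c d /\ sim c a /\ sim d b) \/
  (t = Shift tI /\ a = Shift tI /\ b = tOmega).
Proof. intros a b t H; inversion H; subst; first [right; repeat split; reflexivity | left; eauto | eauto]. Qed.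

Lemma sim_lam_l : forall a t, sim (Lam a) t -> exists b, t = Lam b /\ sim a b.
Proof. intros a t H; inversion H; subst; first [right; repeat split; reflexivity | left; eauto | eauto]. Qed.
Lemma sim_lam_r : forall a t, sim t (Lam a) -> exists b, t = Lam b /\ sim b a.
Proof. intros a t H; inversion H; subst; first [right; repeat split; reflexivity | left; eauto | eauto]. Qed.
Lemma sim_reset_l : forall a t, sim (Reset a) t -> exists b, t = Reset b /\ sim a b.
Proof. intros a t H; inversion H; subst; first [right; repeat split; reflexivity | left; eauto | eauto]. Qed.
Lemma sim_reset_r : forall a t, sim t (Reset a) -> exists b, t = Reset b /\ sim b a.
Proof. intros a t H; inversion H; subst; first [right; repeat split; reflexivity | left; eauto | eauto]. Qed.
Lemma sim_shift_l : forall a t, sim (Shift a) t ->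
  (exists b, t = Shift b /\ sim a b) \/ (a = tI /\ t = App (Shift tI) tOmega).
Proof. intros a t H; inversion H; subst; first [right; repeat split; reflexivity | left; eauto | eauto]. Qed.
Lemma sim_shift_r : forall a t, sim t (Shift a) -> exists b, t = Shift b /\ sim b a.
Proof. intros a t H; inversion H; subst; first [right; repeat split; reflexivity | left; eauto | eauto]. Qed.

Lemma val_l : forall a b, sim a b -> is_value a -> is_value b.
Proof. intros a b H; destruct H; simpl; auto. Qed.
Lemma val_r : forall a b, sim a b -> is_value b -> is_value a.
Proof. intros a b H; destruct H; simpl; auto. Qed.

Lemma sim_open : forall a a', sim a a' -> forall k b b', sim b b' ->
  sim (open_rec k b a) (open_rec k b' a').
Proof.
  intros a a' H; induction H; intros k u u' Hu; simpl.
  - unfold tI, tOmega; cbn. exact s_base.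
  - destruct (Nat.eqb n k); auto; constructor.
  - constructor.
  - constructor; auto.
  - constructor; auto.
  - constructor; auto.
  - constructor; auto.
Qed.

Lemma sim_close : forall a a', sim a a' -> forall k x,
  sim (close_rec k x a) (close_rec k x a').
Proof.
  intros a a' H; induction H; intros k z; simpl.
  - unfold tI, tOmega; cbn. exact s_base.
  - constructor.
  - destruct (Nat.eqb x z); constructor.
  - constructor; auto.
  - constructor; auto.
  - constructor; auto.
  - constructor; auto.
Qed.

Fixpoint esim (E0 E1 : ectx) : Prop :=
  match E0, E1 with
  | EHole, EHole => True
  | EAppR v E, EAppR v' E' => sim v v' /\ esim E E'
  | EAppL E t, EAppL E' t' => esim E E' /\ sim t t'
  | EReset E, EReset E' => esim E E'
  | _, _ => False
  end.

Fixpoint psim (F0 F1 : pctx) : Prop :=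
  match F0, F1 with
  | PHole, PHole => True
  | PAppR v F, PAppR v' F' => sim v v' /\ psim F F'
  | PAppL F t, PAppL F' t' => psim F F' /\ sim t t'
  | _, _ => False
  end.

Lemma esim_plug : forall E0 E1 a b, esim E0 E1 -> sim a b -> sim (plugE E0 a) (plugE E1 b).
Proof.
  induction E0; destruct E1; simpl; intros; try tauto; try constructor;
  try (destruct H); auto.
Qed.

Lemma psim_plug : forall F0 F1 a b, psim F0 F1 -> sim a b -> sim (plugP F0 a) (plugP F1 b).
Proof.
  induction F0; destruct F1; simpl; intros; try tauto; try constructor;
  try (destruct H); auto.
Qed.

Definition redex_shape (r : term) : Prop :=
  match r with App (Lam _) _ => True | Reset _ => True | _ => False end.

Lemma plugE_shift : forall E r s, plugE E r = Shift s -> E = EHole /\ r = Shift s.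
Proof. destruct E; simpl; intros; try discriminate; auto. Qed.
Lemma plugP_shift : forall F r s, plugP F r = Shift s -> F = PHole /\ r = Shift s.
Proof. destruct F; simpl; intros; try discriminate; auto. Qed.

Lemma invE_l : forall E0 r0 b, sim (plugE E0 r0) b -> ectx_ok E0 ->
  exists E1 r1, b = plugE E1 r1 /\ ectx_ok E1 /\ esim E0 E1 /\ sim r0 r1.
Proof.
  induction E0; simpl; intros r0 b H Hok.
  - exists EHole, b; simpl; auto.
  - destruct Hok as [Hv Hok].
    apply sim_app_l in H as [c [d [-> [Hc Hd]]]].
    destruct (IHE0 _ _ Hd Hok) as [E1 [r1 [-> [H1 [H2 H3]]]]].
    exists (EAppR c E1), r1; simpl; repeat split; eauto using val_l.
  - apply sim_app_l in H as [c [d [-> [Hc Hd]]]].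
    destruct (IHE0 _ _ Hc Hok) as [E1 [r1 [-> [H1 [H2 H3]]]]].
    exists (EAppL E1 d), r1; simpl; repeat split; eauto.
  - apply sim_reset_l in H as [c [-> Hc]].
    destruct (IHE0 _ _ Hc Hok) as [E1 [r1 [-> [H1 [H2 H3]]]]].
    exists (EReset E1), r1; simpl; repeat split; eauto.
Qed.

Lemma invE_r : forall E1 r1 a, sim a (plugE E1 r1) -> ectx_ok E1 -> redex_shape r1 ->
  exists E0 r0, a = plugE E0 r0 /\ ectx_ok E0 /\ esim E0 E1 /\ sim r0 r1.
Proof.
  induction E1; simpl; intros r1 a H Hok Hr.
  - exists EHole, a; simpl; auto.
  - destruct Hok as [Hv Hok].
    apply sim_app_r in H as [[c [d [-> [Hc Hd]]]] | [_ [-> _]]];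
      [| simpl in Hv; contradiction].
    destruct (IHE1 _ _ Hd Hok Hr) as [E0 [r0 [-> [H1 [H2 H3]]]]].
    exists (EAppR c E0), r0; simpl; repeat split; eauto using val_r.
  - apply sim_app_r in H as [[c [d [-> [Hc Hd]]]] | [_ [Hs _]]].
    + destruct (IHE1 _ _ Hc Hok Hr) as [E0 [r0 [-> [H1 [H2 H3]]]]].
      exists (EAppL E0 d), r0; simpl; repeat split; eauto.
    + apply plugE_shift in Hs as [_ ->]. simpl in Hr; contradiction.
  - apply sim_reset_r in H as [c [-> Hc]].
    destruct (IHE1 _ _ Hc Hok Hr) as [E0 [r0 [-> [H1 [H2 H3]]]]].
    exists (EReset E0), r0; simpl; repeat split; eauto.
Qed.

Lemma invP_l : forall F0 s0 b, sim (plugP F0 (Shift s0)) b -> pctx_ok F0 ->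
  (exists F1 s1, pctx_ok F1 /\ b = plugP F1 (Shift s1) /\ psim F0 F1 /\ sim s0 s1) \/
  (s0 = tI /\ exists F1, pctx_ok F1 /\ b = plugP F1 (Shift tI)).
Proof.
  induction F0; simpl; intros s0 b H Hok.
  - apply sim_shift_l in H as [[c [-> Hc]] | [-> ->]].
    + left; exists PHole, c; simpl; auto.
    + right; split; auto; exists (PAppL PHole tOmega); simpl; auto.
  - destruct Hok as [Hv Hok].
    apply sim_app_l in H as [c [d [-> [Hc Hd]]]].
    destruct (IHF0 _ _ Hd Hok) as [[F1 [s1 [H1 [-> [H2 H3]]]]] | [-> [F1 [H1 ->]]]].
    + left; exists (PAppR c F1), s1; simpl; repeat split; eauto using val_l.
    + right; split; auto; exists (PAppR c F1); simpl; repeat split; eauto using val_l.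
  - apply sim_app_l in H as [c [d [-> [Hc Hd]]]].
    destruct (IHF0 _ _ Hc Hok) as [[F1 [s1 [H1 [-> [H2 H3]]]]] | [-> [F1 [H1 ->]]]].
    + left; exists (PAppL F1 d), s1; simpl; repeat split; eauto.
    + right; split; auto; exists (PAppL F1 d); simpl; repeat split; eauto.
Qed.

Lemma invP_r : forall F1 s1 a, sim a (plugP F1 (Shift s1)) -> pctx_ok F1 ->
  (exists F0 s0, pctx_ok F0 /\ a = plugP F0 (Shift s0) /\ psim F0 F1 /\ sim s0 s1) \/
  (s1 = tI /\ exists F0, pctx_ok F0 /\ a = plugP F0 (Shift tI)).
Proof.
  induction F1; simpl; intros s1 a H Hok.
  - apply sim_shift_r in H as [c [-> Hc]].
    left; exists PHole, c; simpl; auto.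
  - destruct Hok as [Hv Hok].
    apply sim_app_r in H as [[c [d [-> [Hc Hd]]]] | [_ [-> _]]];
      [| simpl in Hv; contradiction].
    destruct (IHF1 _ _ Hd Hok) as [[F0 [s0 [H1 [-> [H2 H3]]]]] | [-> [F0 [H1 ->]]]].
    + left; exists (PAppR c F0), s0; simpl; repeat split; eauto using val_r.
    + right; split; auto; exists (PAppR c F0); simpl; repeat split; eauto using val_r.
  - apply sim_app_r in H as [[c [d [-> [Hc Hd]]]] | [-> [Hs _]]].
    + destruct (IHF1 _ _ Hc Hok) as [[F0 [s0 [H1 [-> [H2 H3]]]]] | [-> [F0 [H1 ->]]]].
      * left; exists (PAppL F0 d), s0; simpl; repeat split; eauto.
      * right; split; auto; exists (PAppL F0 d); simpl; repeat split; eauto.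
    + apply plugP_shift in Hs as [_ Hs]. injection Hs as ->.
      right; split; auto; exists PHole; simpl; auto.
Qed.

Lemma open_tI : forall u, open tI u = tI.
Proof. reflexivity. Qed.

Lemma sim_step_l : forall t0 t0', step t0 t0' -> forall t1, sim t0 t1 ->
  exists t1', step t1 t1' /\ sim t0' t1'.
Proof.
  intros t0 t0' Hs; destruct Hs as [E t v HE Hv | E F t HE HF | E v HE Hv];
    intros t1 Hsim.
  - destruct (invE_l _ _ _ Hsim HE) as [E1 [r1 [-> [HE1 [Hes Hr]]]]].
    apply sim_app_l in Hr as [a [b [-> [Ha Hb]]]].
    apply sim_lam_l in Ha as [t' [-> Ht]].
    exists (plugE E1 (open t' b)); split.
    + constructor; eauto using val_l.
    + apply esim_plug; auto. apply sim_open; auto.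
  - destruct (invE_l _ _ _ Hsim HE) as [E1 [r1 [-> [HE1 [Hes Hr]]]]].
    apply sim_reset_l in Hr as [b [-> Hb]].
    destruct (invP_l _ _ _ Hb HF) as [[F1 [s1 [H1 [-> [H2 H3]]]]] | [-> [F1 [H1 ->]]]].
    + eexists; split. apply step_shift; auto.
      apply esim_plug; auto. constructor. apply sim_open; auto.
      constructor; constructor; apply psim_plug; auto; constructor.
    + eexists; split. apply step_shift; auto.
      rewrite !open_tI. apply esim_plug; auto. constructor. apply sim_refl.
  - destruct (invE_l _ _ _ Hsim HE) as [E1 [r1 [-> [HE1 [Hes Hr]]]]].
    apply sim_reset_l in Hr as [b [-> Hb]].
    eexists; split. apply step_reset; eauto using val_l.
    apply esim_plug; auto.
Qed.

Lemma sim_step_r : forall t1 t1', step t1 t1' -> forall t0, sim t0 t1 ->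
  exists t0', step t0 t0' /\ sim t0' t1'.
Proof.
  intros t1 t1' Hs; destruct Hs as [E t v HE Hv | E F t HE HF | E v HE Hv];
    intros t0 Hsim.
  - destruct (invE_r _ _ _ Hsim HE I) as [E0 [r0 [-> [HE0 [Hes Hr]]]]].
    apply sim_app_r in Hr as [[a [b [-> [Ha Hb]]]] | [_ [Hd _]]]; [|discriminate].
    apply sim_lam_r in Ha as [t' [-> Ht]].
    exists (plugE E0 (open t' b)); split.
    + constructor; eauto using val_r.
    + apply esim_plug; auto. apply sim_open; auto.
  - destruct (invE_r _ _ _ Hsim HE I) as [E0 [r0 [-> [HE0 [Hes Hr]]]]].
    apply sim_reset_r in Hr as [b [-> Hb]].
    destruct (invP_r _ _ _ Hb HF) as [[F0 [s0 [H1 [-> [H2 H3]]]]] | [-> [F0 [H1 ->]]]].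
    + eexists; split. apply step_shift; auto.
      apply esim_plug; auto. constructor. apply sim_open; auto.
      constructor; constructor; apply psim_plug; auto; constructor.
    + eexists; split. apply step_shift; auto.
      rewrite !open_tI. apply esim_plug; auto. constructor. apply sim_refl.
  - destruct (invE_r _ _ _ Hsim HE I) as [E0 [r0 [-> [HE0 [Hes Hr]]]]].
    apply sim_reset_r in Hr as [b [-> Hb]].
    eexists; split. apply step_reset; eauto using val_r.
    apply esim_plug; auto.
Qed.

Lemma eval_l : forall t0 u0, steps t0 u0 -> irreducible u0 -> forall t1, sim t0 t1 ->
  exists u1, eval t1 u1 /\ sim u0 u1.
Proof.
  intros t0 u0 H; induction H; intros Hirr t1 Hs.
  - exists t1; split; auto. split; [constructor|].
    intros [t' Ht]. destruct (sim_step_r _ _ Ht _ Hs) as [t0' [Hst _]].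
    apply Hirr; eauto.
  - destruct (sim_step_l _ _ H _ Hs) as [t1' [Hst Hs']].
    destruct (IHsteps Hirr _ Hs') as [u1 [[Hu1 Hi] Hs'']].
    exists u1; split; auto. split; auto. econstructor; eauto.
Qed.

Lemma eval_r : forall t1 u1, steps t1 u1 -> irreducible u1 -> forall t0, sim t0 t1 ->
  exists u0, eval t0 u0 /\ sim u0 u1.
Proof.
  intros t1 u1 H; induction H; intros Hirr t0 Hs.
  - exists t0; split; auto. split; [constructor|].
    intros [t' Ht]. destruct (sim_step_l _ _ Ht _ Hs) as [t1' [Hst _]].
    apply Hirr; eauto.
  - destruct (sim_step_r _ _ H _ Hs) as [t0' [Hst Hs']].
    destruct (IHsteps Hirr _ Hs') as [u0 [[Hu0 Hi] Hs'']].
    exists u0; split; auto. split; auto. econstructor; eauto.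
Qed.

Lemma cs_l : forall a b, sim a b -> control_stuck a -> control_stuck b.
Proof.
  intros a b H [F [s [HF ->]]].
  destruct (invP_l _ _ _ H HF) as [[F1 [s1 [H1 [-> _]]]] | [_ [F1 [H1 ->]]]];
    red; eauto.
Qed.

Lemma cs_r : forall a b, sim a b -> control_stuck b -> control_stuck a.
Proof.
  intros a b H [F [s [HF ->]]].
  destruct (invP_r _ _ _ H HF) as [[F1 [s1 [H1 [-> _]]]] | [_ [F1 [H1 ->]]]];
    red; eauto.
Qed.

Lemma sim_plugG : forall C, sim (plugG C (Shift tI)) (plugG C (App (Shift tI) tOmega)).
Proof.
  induction C; simpl; try constructor; try apply sim_close; auto; apply sim_refl.
Qed.

Lemma part1 : ctx_equiv (Shift tI) (App (Shift tI) tOmega).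
Proof.
  intros C _ _ _. pose proof (sim_plugG C) as Hs. split; split.
  - intros [v [[H1 H2] H3]]. destruct (eval_l _ _ H1 H2 _ Hs) as [u [Hu Hsu]].
    eauto using val_l.
  - intros [v [[H1 H2] H3]]. destruct (eval_r _ _ H1 H2 _ Hs) as [u [Hu Hsu]].
    eauto using val_r.
  - intros [v [[H1 H2] H3]]. destruct (eval_l _ _ H1 H2 _ Hs) as [u [Hu Hsu]].
    eauto using cs_l.
  - intros [v [[H1 H2] H3]]. destruct (eval_r _ _ H1 H2 _ Hs) as [u [Hu Hsu]].
    eauto using cs_r.
Qed.

Lemma step_inv : forall t t', step t t' ->
  exists E r, t = plugE E r /\ ectx_ok E /\ redex_shape r.
Proof.
  intros t t' H; destruct H; do 2 eexists; (split; [reflexivity|]); simpl; auto.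
Qed.

Lemma irr_shift : irreducible (Shift tI).
Proof.
  intros [t' H]. apply step_inv in H as [E [r [He [_ Hr]]]].
  symmetry in He. apply plugE_shift in He as [_ ->]. exact Hr.
Qed.

Lemma irr_fvar : forall x, irreducible (FVar x).
Proof.
  intros x [t' H]. apply step_inv in H as [E [r [He [_ Hr]]]].
  destruct E; simpl in He; try discriminate; subst; exact Hr.
Qed.

Lemma irr_app : irreducible (App (Shift tI) tOmega).
Proof.
  intros [t' H]. apply step_inv in H as [E [r [He [Hok Hr]]]].
  destruct E; simpl in He, Hok.
  - subst; exact Hr.
  - injection He as <- _. destruct Hok as [[] _].
  - injection He as He _. symmetry in He. apply plugE_shift in He as [_ ->]. exact Hr.
  - discriminate.
Qed.

Lemma steps_irr : forall t u, steps t u -> irreducible t -> u = t.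
Proof.
  intros t u H; destruct H; intros Hi; auto. exfalso; apply Hi; eauto.
Qed.

Fixpoint has_reset (t : term) : bool :=
  match t with
  | Reset _ => true
  | Lam a | Shift a => has_reset a
  | App a b => has_reset a || has_reset b
  | _ => false
  end.

Lemma has_reset_plug : forall E s, has_reset (plugE E (Reset s)) = true.
Proof.
  induction E; intros; simpl; try rewrite IHE; auto.
  apply Bool.orb_true_r.
Qed.

Lemma step_omega : forall x t', step (App (FVar x) tOmega) t' -> t' = App (FVar x) tOmega.
Proof.
  intros x t' H. remember (App (FVar x) tOmega) as w eqn:Hw.
  destruct H.
  - destruct E; simpl in Hw; try discriminate.
    + injection Hw as -> Hw. destruct E; simpl in Hw; try discriminate.
      * injection Hw as -> ->. reflexivity.
      * injection Hw as _ Hw. destruct E; discriminate.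
      * injection Hw as Hw _. destruct E; discriminate.
    + injection Hw as Hw _. destruct E; discriminate.
  - exfalso. pose proof (has_reset_plug E (plugP F (Shift t))) as Hr.
    rewrite Hw in Hr. discriminate.
  - exfalso. pose proof (has_reset_plug E v) as Hr.
    rewrite Hw in Hr. discriminate.
Qed.

Lemma no_eval_omega : forall x u, ~ eval (App (FVar x) tOmega) u.
Proof.
  intros x u [H Hi].
  remember (App (FVar x) tOmega) as w eqn:Hw. induction H.
  - subst. apply Hi. exists (App (FVar x) tOmega).
    change (App (FVar x) tOmega) with
      (plugE (EAppR (FVar x) EHole) (App (Lam (App (BVar 0) (BVar 0))) (Lam (App (BVar 0) (BVar 0))))) at 1.
    change (App (FVar x) tOmega) with
      (plugE (EAppR (FVar x) EHole) (open (App (BVar 0) (BVar 0)) (Lam (App (BVar 0) (BVar 0))))).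
    constructor; simpl; auto.
  - subst. apply step_omega in H. subst. auto.
Qed.

Lemma part2 : ~ nf_bisimilar (Shift tI) (App (Shift tI) tOmega).
Proof.
  intros [R [[Hsim _] HR]].
  destruct (Hsim _ _ HR (Shift tI)) as [t1' [[Hst Hirr] Hnf]].
  { split; [constructor | apply irr_shift]. }
  apply steps_irr in Hst; [subst | apply irr_app].
  destruct Hnf as [[Hv _] | [[F0 [s0 [F1 [s1 [HF0 [HF1 [E0 [E1 [Her _]]]]]]]]] | Hc]].
  - exact Hv.
  - symmetry in E0. apply plugP_shift in E0 as [-> _].
    destruct F1; simpl in E1; try discriminate.
    + injection E1 as <- _. destruct HF1 as [[] _].
    + injection E1 as E1 <-. symmetry in E1. apply plugP_shift in E1 as [-> _].
      simpl in Her.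
      destruct Her as [[E0' [G0 [E1' [G1 [_ [_ [Hc _]]]]]]] |
                       [G0 [G1 [_ [_ [Hg0 [Hg1 [x [_ [_ Hx]]]]]]]]]].
      * destruct E0'; discriminate.
      * destruct G0; simpl in Hg0; try discriminate.
        destruct G1; simpl in Hg1; try discriminate.
        injection Hg1 as Hg1 Ht; subst. destruct G1; simpl in Hg1; try discriminate.
        simpl in Hx.
        destruct (Hsim _ _ Hx (FVar x)) as [u [Hu _]].
        { split; [constructor | apply irr_fvar]. }
        exact (no_eval_omega _ _ Hu).
  - destruct Hc as [E0 [E1 [x [v0 [v1 [_ [_ [He _]]]]]]]].
    destruct E0; simpl in He; discriminate.
Qed.

Theorem proposition2 :
  ctx_equiv (Shift tI) (App (Shift tI) tOmega) /\
  ~ nf_bisimilar (Shift tI) (App (Shift tI) tOmega).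
Proof. split; [exact part1 | exact part2]. Qed.
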